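(* Let $(A_n(x))_{n\ge0}$ be the Appell sequence of a complex sequence $(\alpha_n)_{n\ge0}$. The following are equivalent: (i) (R): $A_n(1-x)=(-1)^nA_n(x)$ for all $n\ge0$; (ii) $A_n(1)=(-1)^n\alpha_n$ for all $n\ge0$; (iii) $A_n(\tfrac12)=0$ for all odd $n\ge1$. Moreover, (R) is equivalent to: $A^\star_n(1)=(-1)^n\alpha_n$ for all $n\ge0$ together with $A^\star_n(2)=0$ for all odd $n\ge1$. Finally, (R) implies $\alpha_1=-\tfrac12\alpha_0$.
   Context: Let $(\alpha_n)_{n\ge0}$ be an arbitrary sequence of complex numbers (no assumption $\alpha_0\ne0$). Its Appell polynomials are $A_n(x)=\sum_{\nu=0}^{n}\binom{n}{\nu}\alpha_{n-\nu}x^\nu$ for $n\ge0$, equivalently $\big(\sum_{n\ge0}\alpha_n t^n/n!\big)e^{xt}=\sum_{n\ge0}A_n(x)t^n/n!$. The reciprocal Appell polynomials are $A^\star_n(x)=x^nA_n(x^{-1})=\sum_{\nu=0}^{n}\binom{n}{\nu}\alpha_\nu x^\nu$. *)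

(* Defs.v *)
From HB Require Import structures.
From mathcomp Require Import all_boot all_order all_algebra.
From mathcomp Require Import complex reals.
Set Implicit Arguments. Unset Strict Implicit. Unset Printing Implicit Defensive.
Import Order.TTheory GRing.Theory Num.Theory.
Local Open Scope ring_scope.

Definition appell {C : pzRingType} (alpha : nat -> C) (n : nat) (x : C) : C :=
  \sum_(0 <= nu < n.+1) 'C(n, nu)%:R * alpha (n - nu)%N * x ^+ nu.

Definition appell_star {C : pzRingType} (alpha : nat -> C) (n : nat) (x : C) : C :=
  \sum_(0 <= nu < n.+1) 'C(n, nu)%:R * alpha nu * x ^+ nu.

(* Main.v *)
Require Import Defs.
From HB Require Import structures.
From mathcomp Require Import all_boot all_order all_algebra.
From mathcomp Require Import complex reals.
From mathcomp Require Import ring lra zify.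
Import Order.TTheory GRing.Theory Num.Theory.
Local Open Scope ring_scope.

Lemma bin_swap n m i : ('C(n, m) * 'C(n - m, i) = 'C(n, i) * 'C(n - i, m))%N.
Proof.
have [le|lt] := leqP (m + i) n; last first.
  have z : forall p q, (n < p + q)%N -> ('C(n, p) * 'C(n - p, q) = 0)%N.
    move=> p q hpq; have [hp|hp] := leqP p n.
      by rewrite (bin_small (n := n - p)) ?muln0 //; lia.
    by rewrite bin_small.
  by rewrite z // z // addnC.
have hm : (m <= n)%N by lia.
have hi : (i <= n)%N by lia.
have h1 := bin_fact hm. have h2 := bin_fact hi.
have h3 : (i <= n - m)%N by lia. have h4 : (m <= n - i)%N by lia.
have h5 := bin_fact h3. have h6 := bin_fact h4.
have e : (n - m - i = n - i - m)%N by lia.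
rewrite e in h5.
have p : (0 < m`! * i`! * (n - i - m)`!)%N by rewrite !muln_gt0 !fact_gt0.
apply/eqP; rewrite -(eqn_pmul2r p); apply/eqP.
transitivity (n`!).
  rewrite -h1 -h5; ring.
rewrite -h2 -h6; ring.
Qed.

Lemma appellE (C : comPzRingType) (a : nat -> C) n x :
  appell a n x = \sum_(m < n.+1) 'C(n, m)%:R * a m * x ^+ (n - m).
Proof.
rewrite /appell big_nat_rev /= big_mkord; apply: eq_bigr => i _.
rewrite add0n subSS bin_sub ?subKn // -ltnS //.
Qed.

Lemma appell_add (C : comPzRingType) (a : nat -> C) n y z :
  appell a n (y + z) =
  \sum_(i < n.+1) 'C(n, i)%:R * appell a (n - i) y * z ^+ i.
Proof.
rewrite appellE.
under eq_bigr => m _ do rewrite exprDn (@big_ord_widen _ _ _ _ n.+1 (fun i : nat => y ^+ (n - m - i) * z ^+ i *+ 'C(n - m, i)) (leq_subr m n : ((n - m).+1 <= n.+1)%N))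
  big_mkcond mulr_sumr.
rewrite exchange_big /=; apply: eq_bigr => i _.
rewrite appellE (@big_ord_widen _ _ _ _ n.+1 (fun m : nat => 'C(n - i, m)%:R * a m * y ^+ (n - i - m)) (leq_subr i n : ((n - i).+1 <= n.+1)%N)) mulr_sumr mulr_suml [RHS]big_mkcond.
apply: eq_bigr => m _.
have -> : (m < (n - i).+1)%N = (i < (n - m).+1)%N.
  by have := ltn_ord i; have := ltn_ord m; rewrite !ltnS => ? ?; apply/idP/idP => ?; lia.
case: ifP => _; last by rewrite !(mulr0, mul0r).
rewrite -mulr_natr (subnAC n m i); set e := (_ ^+ _).
have := bin_swap n m i => /(congr1 (fun k => k%:R : C)); rewrite !natrM => E.
transitivity (('C(n, m)%:R * 'C(n - m, i)%:R : C) * a m * e * z ^+ i); first ring.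
rewrite E; ring.
Qed.

Lemma appell0 (C : comPzRingType) (a : nat -> C) n : appell a n 0 = a n.
Proof.
rewrite /appell big_nat_recl // big1 ?addr0 => [|i _]; last by rewrite expr0n mulr0.
by rewrite bin0 subn0 expr0 !mul1r mulr1.
Qed.

Lemma astar1 (C : comPzRingType) (a : nat -> C) n : appell_star a n 1 = appell a n 1.
Proof.
rewrite appellE /appell_star big_mkord; apply: eq_bigr => i _; by rewrite !expr1n.
Qed.

Lemma astar2 (F : fieldType) (a : nat -> F) n : (2%:R : F) != 0 ->
  appell_star a n 2%:R = 2%:R ^+ n * appell a n 2%:R^-1.
Proof.
move=> h2; rewrite appellE /appell_star big_mkord mulr_sumr; apply: eq_bigr => i _.
have hi : (i <= n)%N by rewrite -ltnS.
have e : (2%:R : F) ^+ n = 2%:R ^+ (n - i) * 2%:R ^+ i by rewrite -exprD subnK.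
rewrite e exprVn.
have h : (2%:R : F) ^+ (n - i) != 0 by rewrite expf_neq0.
by field.
Qed.

Local Open Scope complex_scope.

Theorem mainTheorem1 (R : realType) (alpha : nat -> R[i]) :
  let A := appell alpha in
  let Astar := appell_star alpha in
  let PR := forall (n : nat) (x : R[i]), A n (1 - x) = (-1) ^+ n * A n x in
  [/\ PR <-> (forall n : nat, A n 1 = (-1) ^+ n * alpha n),
      PR <-> (forall n : nat, odd n -> A n (2%:R^-1) = 0),
      PR <-> ((forall n : nat, Astar n 1 = (-1) ^+ n * alpha n) /\
              (forall n : nat, odd n -> Astar n 2%:R = 0))
    & PR -> alpha 1%N = - (2%:R^-1 * alpha 0%N)].
Proof.
move=> A Astar PR; rewrite /PR /A /Astar; clear A Astar PR.
have h2 : (2%:R : R[i]) != 0 by rewrite pnatr_eq0.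
have hhalf : 1 - 2%:R^-1 = (2%:R^-1 : R[i]) by field.
have L1 : (forall (n : nat) (x : R[i]), appell alpha n (1 - x) = (-1) ^+ n * appell alpha n x) ->
   forall n, appell alpha n 1 = (-1) ^+ n * alpha n.
  by move=> H n; rewrite -appell0 -H subr0.
have L2 : (forall n, appell alpha n 1 = (-1) ^+ n * alpha n) ->
   (forall (n : nat) (x : R[i]), appell alpha n (1 - x) = (-1) ^+ n * appell alpha n x).
  move=> H n x; rewrite appell_add [in RHS]/appell big_mkord mulr_sumr; apply: eq_bigr => i _.
  have hi : (i <= n)%N by rewrite -ltnS.
  have s : ((-1) ^+ n : R[i]) = (-1) ^+ (n - i) * (-1) ^+ i by rewrite -exprD subnK.
  by rewrite H (exprNn x) s; ring.
have L3 : (forall (n : nat) (x : R[i]), appell alpha n (1 - x) = (-1) ^+ n * appell alpha n x) ->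
   forall n, odd n -> appell alpha n 2%:R^-1 = 0.
  move=> H n hn; have := H n 2%:R^-1.
  rewrite hhalf -signr_odd hn expr1 mulN1r => E.
  have : appell alpha n 2%:R^-1 * 2%:R = 0 by rewrite mulr_natr mulr2n {1}E addNr.
  by move/eqP; rewrite mulf_eq0 (negbTE h2) orbF => /eqP.
have L4 : (forall n, odd n -> appell alpha n 2%:R^-1 = 0) ->
   (forall (n : nat) (x : R[i]), appell alpha n (1 - x) = (-1) ^+ n * appell alpha n x).
  move=> H n x.
  have ex : x = 2%:R^-1 + (x - 2%:R^-1) by ring.
  have e1 : 1 - x = 2%:R^-1 + - (x - 2%:R^-1) by field.
  rewrite e1 [in RHS]ex !appell_add mulr_sumr; apply: eq_bigr => i _.
  have hi : (i <= n)%N by rewrite -ltnS.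
  rewrite (exprNn (x - 2%:R^-1)).
  case ho : (odd (n - i)); first by rewrite H // !(mul0r, mulr0).
  have s : ((-1) ^+ n : R[i]) = (-1) ^+ i.
    by rewrite -[in LHS](subnK hi) exprD -(signr_odd _ (n - i)) ho expr0 mul1r.
  by rewrite s; ring.
split.
- by split; [apply: L1 | apply: L2].
- by split; [apply: L3 | apply: L4].
- split.
    move=> H; split => n.
      by rewrite astar1 L1.
    by move=> hn; rewrite astar2 // L3 // mulr0.
  by case=> H _; apply: L2 => n; rewrite -astar1.
- move=> /L1 /(_ 1%N).
  rewrite /appell !big_nat_recl // big_geq //= => E.
  rewrite bin0 binn subn0 subnn !expr1n !mulr1 !mul1r addr0 expr1 mulN1r in E.
  have e0 : alpha 0%N = - alpha 1%N - alpha 1%N.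
    by transitivity ((alpha 1%N + alpha 0%N) - alpha 1%N); [ring | rewrite E].
  by rewrite e0; field.
Qed.
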